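(* Let $n\ge3$. There is no isomorphism preserving the structure of $\mathbb{Z}_2^n$-graded algebra between $\mathbb{O}_{0,n}$ and $\mathbb{O}_{n,0}$.
   Context: $\mathbb{Z}_2=\{0,1\}$. For $p+q=n\ge3$, $\mathbb{O}_{p,q}$ is the real algebra with basis $\{u_x: x\in\mathbb{Z}_2^n\}$ and product $u_x\cdot u_y=(-1)^{f(x,y)}u_{x+y}$, where $f(x,y)=\sum_{1\le i<j<k\le n}(x_ix_jy_k+x_iy_jx_k+y_ix_jx_k)+\sum_{1\le i\le j\le n}x_iy_j+\sum_{1\le i\le p}x_iy_i$. An isomorphism preserving the graded structure is an algebra isomorphism sending each homogeneous element (scalar multiple of some $u_x$) to a homogeneous element. *)

(* Defs.v *)
From HB Require Import structures.
From mathcomp Require Import all_boot all_order all_algebra.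
From mathcomp Require Import reals.
Set Implicit Arguments. Unset Strict Implicit. Unset Printing Implicit Defensive.
Import Order.TTheory GRing.Theory Num.Theory.
Local Open Scope ring_scope.

(* Z_2^n, indexed by 'I_n (index i corresponds to paper's index i+1). *)
Notation Z2n n := {ffun 'I_n -> bool}.

Definition z2add n (x y : Z2n n) : Z2n n := [ffun i => x i (+) y i].

(* The twisting function f(x,y), as a natural number (only its parity matters). *)
Definition ftw (n p : nat) (x y : Z2n n) : nat :=
  (\sum_(i < n) \sum_(j < n) \sum_(k < n)
      if (i < j < k)%N then
        (x i && x j && y k) + (x i && y j && x k) + (y i && x j && x k)
      else 0)%N
  + (\sum_(i < n) \sum_(j < n) if (i <= j)%N then (x i && y j : nat) else 0)%N
  + (\sum_(i < n | (i < p)%N) (x i && y i : nat))%N.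

(* Underlying vector space: R-valued functions on Z_2^n, i.e. sum_x a_x u_x. *)
Notation OV R n := {ffun Z2n n -> (R : realType)^o}.

Definition ub (R : realType) n (x : Z2n n) : OV R n := [ffun y => (y == x)%:R].

(* product of O_{p,q}, p + q = n: bilinear extension of
   u_x . u_y = (-1)^f(x,y) u_{x+y} *)
Definition Omul (R : realType) (n p : nat) (a b : OV R n) : OV R n :=
  \sum_(x : Z2n n) \sum_(y : Z2n n)
     (a x * b y * (-1) ^+ @ftw n p x y) *: @ub R n (z2add x y).

Definition homogeneous (R : realType) n (h : OV R n) : Prop :=
  exists (c : R) (x : Z2n n), h = c *: @ub R n x.

Definition graded_iso (R : realType) n (m1 m2 : OV R n -> OV R n -> OV R n)
    (phi : OV R n -> OV R n) : Prop :=
  [/\ (forall (a : R) (u v : OV R n), phi (a *: u + v) = a *: phi u + phi v),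
      bijective phi,
      (forall u v, phi (m1 u v) = m2 (phi u) (phi v)) &
      (forall h, homogeneous h -> homogeneous (phi h))].

(* Main.v *)
Require Import Defs.
From HB Require Import structures.
From mathcomp Require Import all_boot all_order all_algebra.
From mathcomp Require Import reals zify.
Set Implicit Arguments. Unset Strict Implicit. Unset Printing Implicit Defensive.

Definition S1 (F : nat -> nat) m := (\sum_(i < m) F i)%N.
Definition S2 (F : nat -> nat) m :=
  (\sum_(i < m) \sum_(j < m) if (i < j)%N then F i * F j else 0)%N.
Definition Q2 (F : nat -> nat) m :=
  (\sum_(i < m) \sum_(j < m) if (i <= j)%N then F i * F j else 0)%N.
Definition T3 (F : nat -> nat) m :=
  (\sum_(i < m) \sum_(j < m) \sum_(k < m) if (i < j < k)%N then
     F i * F j * F k + F i * F j * F k + F i * F j * F k else 0)%N.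

Lemma S1S F m : S1 F m.+1 = S1 F m + F m.
Proof. by rewrite /S1 big_ord_recr. Qed.

Lemma S2S F m : S2 F m.+1 = S2 F m + S1 F m * F m.
Proof.
rewrite /S2 big_ord_recr /= [X in _ + X]big1 => [|j _]; last first.
  by rewrite ltnNge -ltnS ltn_ord.
rewrite addn0 /S1 big_distrl -big_split /=; apply: eq_bigr => i _.
by rewrite big_ord_recr /= ltn_ord.
Qed.

Lemma Q2S F m : Q2 F m.+1 = Q2 F m + S1 F m * F m + F m * F m.
Proof.
rewrite /Q2 big_ord_recr /= big_ord_recr /= leqnn.
rewrite [X in _ + (X + _)]big1 => [|j _]; last first.
  by rewrite leqNgt ltn_ord.
rewrite add0n. congr (_ + _).
rewrite /S1 big_distrl -big_split /=; apply: eq_bigr => i _.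
by rewrite big_ord_recr /= ltnW.
Qed.

Lemma T3S F m : T3 F m.+1 = T3 F m + S2 F m * F m * 3.
Proof.
rewrite /T3 big_ord_recr /= [X in _ + X]big1 => [|j _]; last first.
  rewrite big1 // => k _; case: ifP => //; move/andP=> [h1 h2].
  by move: (ltn_ord k) (ltn_ord j); lia.
rewrite addn0 /S2 !big_distrl -big_split /=; apply: eq_bigr => i _.
rewrite big_ord_recr /= [X in _ + X]big1 => [|k _]; last first.
  by case: ifP => //; move/andP=> [h1 h2]; move: (ltn_ord k) (ltn_ord i); lia.
rewrite addn0 !big_distrl -big_split /=; apply: eq_bigr => j _.
rewrite big_ord_recr /= ltn_ord andbT; congr (_ + _).
by case: ifP => _; lia.
Qed.

Lemma inv F m : (forall k, F k <= 1) ->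
  let w := S1 F m in let s := S2 F m in let t := T3 F m in
  [/\ Q2 F m = s + w,
   (w %% 4 = 0 -> s %% 2 = 0 /\ t %% 2 = 0),
   (w %% 4 = 1 -> s %% 2 = 0 /\ t %% 2 = 0),
   (w %% 4 = 2 -> s %% 2 = 1 /\ t %% 2 = 0) &
   (w %% 4 = 3 -> s %% 2 = 1 /\ t %% 2 = 1)].
Proof.
move=> HF; elim: m => [|m [IH0 IH1 IH2 IH3 IH4]] /=.
  by rewrite /Q2 /S1 /S2 /T3 !big_ord0.
rewrite Q2S S1S S2S T3S IH0.
have := HF m; case: (F m) => [|[|//]] _.
all: split.
all: lia.
Qed.

Section Par.
Variable m : nat.
Notation n := m.+1.

Definition Fx (x : Z2n n) := fun k : nat => (x (inord k) : nat).

Lemma FxE x (i : 'I_n) : Fx x i = x i.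
Proof. by rewrite /Fx inord_val. Qed.

Lemma Fx1 x k : Fx x k <= 1.
Proof. by rewrite /Fx; case: (x _). Qed.

Lemma ftw_xx p (x : Z2n n) :
  @ftw n p x x = (T3 (Fx x) n + Q2 (Fx x) n + \sum_(i < n | (i < p)%N) Fx x i)%N.
Proof.
rewrite /ftw /T3 /Q2; congr (_ + _ + _).
- apply: eq_bigr => i _; apply: eq_bigr => j _; apply: eq_bigr => k _.
  by rewrite !FxE; case: (x i); case: (x j); case: (x k); case: ifP.
- apply: eq_bigr => i _; apply: eq_bigr => j _.
  by rewrite !FxE; case: (x i); case: (x j); case: ifP.
- by apply: eq_bigr => i _; rewrite FxE; case: (x i).
Qed.

Lemma ftw_0 x : @ftw n 0 x x = (T3 (Fx x) n + S2 (Fx x) n + S1 (Fx x) n)%N.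
Proof.
have [E _ _ _ _] := inv n (@Fx1 x).
rewrite ftw_xx E big1 ?addn0 ?addnA // => i; rewrite ltn0.
Qed.

Lemma ftw_n x : @ftw n n x x = (T3 (Fx x) n + S2 (Fx x) n + S1 (Fx x) n + S1 (Fx x) n)%N.
Proof.
have [E _ _ _ _] := inv n (@Fx1 x).
rewrite ftw_xx E (eq_bigl xpredT) ?addnA // => i; exact: ltn_ord.
Qed.

Lemma oddE a : odd a = (a %% 2 == 1).
Proof. by rewrite modn2; case: odd. Qed.

Lemma par_n0 x : odd (@ftw n n x x) -> odd (@ftw n 0 x x).
Proof.
have [_ H0 H1 H2 H3] := inv n (@Fx1 x).
rewrite ftw_0 ftw_n !oddE => /eqP h; apply/eqP; lia.
Qed.

Definition zz : Z2n n := [ffun _ => false].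

Lemma par_zz p : p = 0 \/ p = n -> ~~ odd (@ftw n p zz zz).
Proof.
have [_ H0 H1 H2 H3] := inv n (@Fx1 zz).
have S0 : S1 (Fx zz) n = 0.
  by rewrite /S1 big1 // => i _; rewrite FxE ffunE.
case=> ->; [rewrite ftw_0|rewrite ftw_n]; rewrite oddE; apply/eqP; lia.
Qed.

Definition ee : Z2n n := [ffun i => i == ord0].

Lemma par_ee : odd (@ftw n 0 ee ee) /\ ~~ odd (@ftw n n ee ee).
Proof.
have [_ H0 H1 H2 H3] := inv n (@Fx1 ee).
have S0 : S1 (Fx ee) n = 1.
  rewrite /S1 (bigD1 ord0) // big1 => [|i hi]; first by rewrite FxE ffunE.
  by rewrite FxE ffunE (negbTE hi).
rewrite ftw_0 ftw_n !oddE; split; apply/eqP; lia.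
Qed.

Lemma addxx (x : Z2n n) : z2add x x = zz.
Proof. by apply/ffunP => i; rewrite !ffunE addbb. Qed.

End Par.

Import Order.TTheory GRing.Theory Num.Theory.
Local Open Scope ring_scope.
Section Alg.
Variable R : realType.
Variable m : nat.
Notation n := m.+1.

Lemma OmulE p (c d : R) (x y : Z2n n) :
  @Omul R n p (c *: @ub R n x) (d *: @ub R n y)
  = (c * d * (-1) ^+ @ftw n p x y) *: @ub R n (z2add x y).
Proof.
rewrite /Omul (bigD1 x) //= [X in _ + X]big1 => [|x' nx']; last first.
  by rewrite big1 // => y' _; rewrite !ffunE (negbTE nx') mulr0n scaler0 !mul0r scale0r.
rewrite addr0 (bigD1 y) //= [X in _ + X]big1 => [|y' ny']; last first.
  by rewrite !ffunE (negbTE ny') mulr0n scaler0 mulr0 mul0r scale0r.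
rewrite addr0 !ffunE !eqxx /=; congr (_ *: _); congr (_ * _); congr (_ * _); exact: mulr1.
Qed.

Lemma scRo (c : R) (a : R^o) : c *: a = c * a.
Proof. by []. Qed.

Lemma ubE (x y : Z2n n) : @ub R n x y = (y == x)%:R.
Proof. by rewrite ffunE. Qed.

Lemma sgn_odd k : odd k -> (-1) ^+ k = - 1 :> R.
Proof. by move=> h; rewrite -signr_odd h expr1. Qed.
Lemma sgn_even k : ~~ odd k -> (-1) ^+ k = 1 :> R.
Proof. by move=> h; rewrite -signr_odd (negbTE h) expr0. Qed.

Theorem main :
  ~ exists phi : OV R n -> OV R n, @graded_iso R n (@Omul R n 0) (@Omul R n n) phi.
Proof.
move=> [phi [Hlin Hbij Hmul Hhom]].
have phi0 : phi 0 = 0.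
  have := Hlin 1 0 0; rewrite scaler0 addr0 scale1r => h.
  by have := congr1 (fun z => z - phi 0) h; rewrite /= addrK subrr => <-.
have phiZ a u : phi (a *: u) = a *: phi u.
  by have := Hlin a u 0; rewrite !addr0 phi0 addr0.
have Hinj := bij_inj Hbij.
have ub_neq0 (x : Z2n n) : @ub R n x != 0.
  by apply/eqP => /ffunP /(_ x); rewrite !ffunE eqxx => /eqP; rewrite oner_eq0.
have Hub x : exists c y, c != 0 /\ phi (@ub R n x) = c *: @ub R n y.
  have [|c [y E]] := Hhom (@ub R n x); first by exists 1, x; rewrite scale1r.
  exists c, y; split => //; apply/eqP => c0.
  move: E; rewrite c0 scale0r -phi0 => /Hinj /eqP; exact/negP/ub_neq0.
pose sig x := odflt x [pick y | phi (@ub R n x) y != 0].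
have Hsig x : exists2 c, c != 0 & phi (@ub R n x) = c *: @ub R n (sig x).
  have [c [y [c0 E]]] := Hub x; exists c => //; rewrite /sig.
  case: pickP => [y' Hy'|H] /=; last first.
    by move: (H y); rewrite E !ffunE scRo eqxx mulr1 c0.
  move: Hy'; rewrite E !ffunE scRo; case: (eqVneq y' y) => [->//|ne].
  by rewrite mulr0n mulr0 eqxx.
have sig_inj : injective sig.
  move=> x1 x2 e; have [c1 c10 E1] := Hsig x1; have [c2 c20 E2] := Hsig x2.
  have : phi (c2 *: @ub R n x1) = phi (c1 *: @ub R n x2).
    by rewrite !phiZ E1 E2 e !scalerA mulrC.
  move/Hinj/ffunP/(_ x1); rewrite !ffunE !scRo eqxx mulr1.
  case: (eqVneq x1 x2) => [->//|ne]; rewrite mulr0n mulr0 => /eqP.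
  by rewrite (negbTE c20).
have unit : phi (@ub R n (zz m)) = @ub R n (zz m).
  have [d d0 E] := Hsig (zz m).
  have h0 : @Omul R n 0 (@ub R n (zz m)) (@ub R n (zz m)) = @ub R n (zz m).
    rewrite -[@ub R n (zz m)]scale1r OmulE addxx sgn_even ?mulr1 //.
    by apply: par_zz; left.
  have := Hmul (@ub R n (zz m)) (@ub R n (zz m)).
  rewrite h0 E OmulE addxx.
  case: (eqVneq (sig (zz m)) (zz m)) => [ez|nz].
    rewrite ez sgn_even ?mulr1; last by apply: par_zz; right.
    move/ffunP/(_ (zz m)); rewrite !ffunE !scRo eqxx !mulr1 => h.
    have d1 : d = 1.
      by apply: (mulIf d0); rewrite mul1r -{1}h.
    by rewrite d1 scale1r.
  move/ffunP/(_ (sig (zz m))); rewrite !ffunE !scRo eqxx (negbTE nz) mulr0n mulr0 mulr1.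
  by move/eqP; rewrite (negbTE d0).
pose A0 := [set x : Z2n n | odd (@ftw n 0 x x)].
pose An := [set x : Z2n n | odd (@ftw n n x x)].
have sub : [set sig x | x in A0] \subset An.
  apply/subsetP => y /imsetP [x]; rewrite !inE => hx ->.
  have [c c0 E] := Hsig x.
  have := Hmul (@ub R n x) (@ub R n x).
  rewrite -[@ub R n x]scale1r OmulE addxx phiZ scale1r unit E OmulE addxx.
  rewrite mul1r sgn_odd //.
  move/ffunP/(_ (zz m)); rewrite !ffunE !scRo eqxx !mulr1.
  case: (boolP (odd _)) => // hy; rewrite sgn_even // mulr1 mul1r => h.
  have := sqr_ge0 c; rewrite expr2 -h oppr_ge0 ler10 //.
have pr : An \proper A0.
  apply/properP; split.
    by apply/subsetP => x; rewrite !inE; exact: par_n0.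
  by exists (ee m); rewrite !inE; case: (par_ee m).
have := proper_card pr; have := subset_leq_card sub.
by rewrite card_imset // => h1 h2; move: (leq_ltn_trans h1 h2); rewrite ltnn.
Qed.

End Alg.

Local Close Scope ring_scope.

(* O_{0,n} = Omul R n 0 ; O_{n,0} = Omul R n n *)
Theorem mainTheorem11 (R : realType) (n : nat) :
  (3 <= n)%N ->
  ~ exists phi : OV R n -> OV R n, @graded_iso R n (@Omul R n 0) (@Omul R n n) phi.
Proof.
case: n => [//|m] _; exact: main.
Qed.
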